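(* Let $(T_\infty,P_\infty)$ be the least fixed point of the jump operator $\Gamma_{\mathscr{TP}}$ (the stage at which the transfinite sequence $(T_\alpha,P_\alpha)$ defined in the context stabilizes). Then the partial model $(\mathbb N,T_\infty,P_\infty)$ is a model of the theory $\mathrm{TP}$, i.e. every sequent derivable in $\mathrm{TP}$ holds in $(\mathbb N,T_\infty,P_\infty)$ under Strong Kleene satisfaction. Hence $\mathrm{TP}$ is $\omega$-consistent.
   Context: Language. Let $\mathcal L_{\mathbb N}$ be the language of first-order Peano arithmetic and $\mathcal L=\mathcal L_{\mathbb N}\cup\{\mathrm T,\mathrm P\}$, where $\mathrm T$ (truth) and $\mathrm P$ (paradoxicality) are unary predicates. $\mathcal L$-formulas are in Tait style: literals are $s=t$, $s\neq t$, $\mathrm Tt$, $\neg\mathrm Tt$, $\mathrm Pt$, $\neg\mathrm Pt$, and formulas are built from literals by $\wedge,\vee,\forall,\exists$; negation of an arbitrary formula is defined by De Morgan dualities ($\neg(\varphi\wedge\psi):=\neg\varphi\vee\neg\psi$, $\neg\forall x\varphi:=\exists x\neg\varphi$, etc.) with $\neg\neg\varphi:=\varphi$. A standard Gödel numbering is fixed; $\#e$ is the code of an expression $e$, $\ulcorner e\urcorner$ is the numeral of $\#e$, $\mathrm{val}(t)$ is the value of a closed term $t$, and $\dot\neg$ is the primitive recursive function with $\dot\neg(\#\varphi)=\#\neg\varphi$. We write $\mathrm T\varphi,\mathrm P\varphi$ for $\mathrm T\ulcorner\varphi\urcorner,\mathrm P\ulcorner\varphi\urcorner$ and identify sentences with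 their codes when speaking of sets of sentences. Semantics. A partial model is $(\mathbb N,T,P)$ with $\mathbb N$ the standard model of arithmetic and $T=(T^+,T^-)$, $P=(P^+,P^-)$ pairs of subsets of $\omega$. Strong Kleene satisfaction $\models_{SK}$ for $\mathcal L$-sentences: arithmetic literals are evaluated in $\mathbb N$; $\mathrm Tt$ is satisfied iff $\mathrm{val}(t)\in T^+$, $\neg\mathrm Tt$ iff $\mathrm{val}(t)\in T^-$, and likewise for $\mathrm Pt,\neg\mathrm Pt$ with $P^+,P^-$; a conjunction is satisfied iff both conjuncts are, a disjunction iff at least one disjunct is, $\forall x\varphi(x)$ iff $\varphi(\bar n)$ is satisfied for all $n\in\omega$, $\exists x\varphi(x)$ iff for some $n$. A sequent $\Gamma\Rightarrow\Delta$ of sentences holds in $(\mathbb N,T,P)$ iff, whenever all members of $\Gamma$ are satisfied, some member of $\Delta$ is; a sequent with free variables holds iff all its numeral instances hold. $\Gamma\Leftrightarrow\Delta$ abbreviates the two sequents $\Gamma\Rightarrow\Delta$ and $\Delta\Rightarrow\Gamma$. Base system. $\mathrm{PA}[\mathrm{SK}]$ is the two-sided sequent calculus for Strong Kleene logic with identity in $\mathcal L$ (initial sequents $\varphi\Rightarrow\varphi$; cut; weakening on both sides; the rule: from $\Gamma\Rightarrow\Delta,\varphi$ infer $\neg\varphi,\Gamma\Rightarrow\Delta$; the usual left and right rules for $\wedge,\vee,\forall,\exists$; reflexivity $\Gamma\Rightarrow\Delta,t=t$; replacement: from $\Gamma\Rightarrow\Delta,\varphi(t)$ infer $\Gamma\Rightarrow\Delta,s\neq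 t,\varphi(s)$), expanded by the initial sequents of Peano arithmetic and the induction rule: from $\varphi(u),\Gamma\Rightarrow\Delta,\varphi(Su)$ infer $\varphi(0),\Gamma\Rightarrow\Delta,\varphi(t)$, for every $\mathcal L$-formula $\varphi$ and eigenvariable $u$. Sentences $\varphi,\psi$ are $\mathrm{PA}[\mathrm{SK}]$-equivalent iff $\mathrm{PA}[\mathrm{SK}]$ derives $\varphi\Leftrightarrow\psi$ and $\neg\varphi\Leftrightarrow\neg\psi$. A sentence $\varphi$ is base paradoxical iff it is $\mathrm{PA}[\mathrm{SK}]$-equivalent to $\neg\mathrm T\varphi$. $B(x)$ is an $\mathcal L_{\mathbb N}$-formula defining in $\mathbb N$ the set of codes of base paradoxical sentences, and $\Pi(x):=B(x)\vee B(\dot\neg x)$. The theory TP. $\mathrm{TP}$ expands $\mathrm{PA}[\mathrm{SK}]$ by the following initial sequents. In them $\varphi,\psi$ are variables ranging over codes of $\mathcal L$-sentences (in the quantifier principles, $\varphi(x)$ denotes the code of the instance, with the numeral of $x$, of a formula code with one free variable), $s,t$ range over codes of closed terms, each principle is read as the corresponding sequents with these free variables and the syntactic side conditions (being a sentence code, closed term code, etc.) as antecedent hypotheses; expressions inside $\mathrm T(\cdot)$, $\mathrm P(\cdot)$ denote codes built by the corresponding primitive recursive syntactic operations (e.g. $\mathrm T\mathrm P\varphi$ is $\mathrm T$ applied to the code of the sentence $\mathrm P\bar n$ with $n$ the value of $\varphi$; $\neg\varphi$ inside a code is $\dot\neg\varphi$), and $A$ ranges over $\{\mathrm T,\mathrm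 P\}$. Truth principles: (T1) $\mathrm{val}(s)=\mathrm{val}(t)\Leftrightarrow\mathrm T(s\dot=t)$ and $\mathrm{val}(s)\neq\mathrm{val}(t)\Leftrightarrow\mathrm T(s\dot\neq t)$; (T2) $\mathrm P\varphi\Leftrightarrow\mathrm T\mathrm P\varphi$ and $\neg\mathrm P\varphi\Leftrightarrow\mathrm T\neg\mathrm P\varphi$; (T3) $\mathrm T\varphi\Leftrightarrow\mathrm T\mathrm T\varphi$ and $\mathrm T\neg\varphi\Leftrightarrow\neg\mathrm T\varphi$; (T4) $\mathrm T\varphi\wedge\mathrm T\psi\Leftrightarrow\mathrm T(\varphi\wedge\psi)$ and $\mathrm T\varphi\vee\mathrm T\psi\Leftrightarrow\mathrm T(\varphi\vee\psi)$; (T5) $\forall x\mathrm T\varphi(x)\Leftrightarrow\mathrm T\forall x\varphi(x)$ and $\exists x\mathrm T\varphi(x)\Leftrightarrow\mathrm T\exists x\varphi(x)$. Paradoxicality principles: (P1) $\Pi(\varphi)\Rightarrow\mathrm P\varphi$; (P2) $\mathrm P\neg A\varphi\Leftrightarrow\mathrm PA\varphi$; (P3) $\mathrm P\mathrm T\varphi\Leftrightarrow\mathrm P\varphi\vee\Pi(\mathrm T\varphi)$; (P4) $\mathrm P(\varphi\wedge\psi)\Leftrightarrow(\mathrm P\varphi\wedge\mathrm P\psi)\vee(\mathrm T\varphi\wedge\mathrm P\psi)\vee(\mathrm T\psi\wedge\mathrm P\varphi)\vee\Pi(\varphi\wedge\psi)$; (P5) $\mathrm P(\varphi\vee\psi)\Leftrightarrow(\mathrm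 P\varphi\wedge\mathrm P\psi)\vee(\neg\mathrm T\varphi\wedge\mathrm P\psi)\vee(\neg\mathrm T\psi\wedge\mathrm P\varphi)\vee\Pi(\varphi\vee\psi)$; (P6) $\mathrm P\forall x\varphi(x)\Leftrightarrow(\exists x\mathrm P\varphi(x)\wedge\forall y(\mathrm P\varphi(y)\vee\mathrm T\varphi(y)))\vee\Pi(\forall x\varphi(x))$; (P7) $\mathrm P\exists x\varphi(x)\Leftrightarrow(\exists x\mathrm P\varphi(x)\wedge\forall y(\mathrm P\varphi(y)\vee\neg\mathrm T\varphi(y)))\vee\Pi(\exists x\varphi(x))$. Interaction principle: (I1) $\mathrm T(\varphi\vee\neg\varphi)\Rightarrow\neg\mathrm P\varphi$. Jump. Let $\mathscr P(x)$ be the $\mathcal L$-formula which is the disjunction of: (1) $x$ codes a sentence and $\Pi(x)$; (2) $x$ codes a sentence $\mathrm Tt$ ($t$ a closed term) and $\mathrm P(\mathrm{val}(t))$; (3) $x$ codes a sentence $\neg\mathrm Tt$ and $\mathrm P(\mathrm{val}(t))$; (4) $x$ codes a sentence $\psi\wedge\theta$ and $(\mathrm P\psi\wedge\mathrm P\theta)\vee(\mathrm T\psi\wedge\mathrm P\theta)\vee(\mathrm T\theta\wedge\mathrm P\psi)$; (5) $x$ codes a sentence $\psi\vee\theta$ and $(\mathrm P\psi\wedge\mathrm P\theta)\vee(\neg\mathrm T\psi\wedge\mathrm P\theta)\vee(\neg\mathrm T\theta\wedge\mathrm P\psi)$; (6) $x$ codes a sentence $\forall v\psi$ and $\exists y\,\mathrm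 P\psi(\dot y)\wedge\forall y(\mathrm P\psi(\dot y)\vee\mathrm T\psi(\dot y))$; (7) $x$ codes a sentence $\exists v\psi$ and $\exists y\,\mathrm P\psi(\dot y)\wedge\forall y(\mathrm P\psi(\dot y)\vee\neg\mathrm T\psi(\dot y))$; here $\psi(\dot y)$ is the code of the result of substituting the numeral of $y$ for $v$. Write $\mathscr P(\varphi)$ for $\mathscr P(\ulcorner\varphi\urcorner)$. Define $\Gamma_{\mathscr{TP}}(T,P)=\big((\{\#\varphi:(\mathbb N,T,P)\models_{SK}\varphi\},\{\#\varphi:(\mathbb N,T,P)\models_{SK}\neg\varphi\}),(\{\#\varphi:(\mathbb N,T,P)\models_{SK}\mathscr P(\varphi)\},\{\#\varphi:(\mathbb N,T,P)\models_{SK}\varphi\vee\neg\varphi\})\big)$, $\varphi$ ranging over $\mathcal L$-sentences. Pairs are ordered componentwise by inclusion. Define $(T_0,P_0)=((\emptyset,\emptyset),(\emptyset,\emptyset))$, $(T_{\beta+1},P_{\beta+1})=\Gamma_{\mathscr{TP}}(T_\beta,P_\beta)$, and $(T_\lambda,P_\lambda)=\bigcup_{\beta<\lambda}(T_\beta,P_\beta)$ (componentwise union) for limit $\lambda$. $\omega$-consistency is meant in the standard sense: there is no formula $\varphi(x)$ such that the theory derives $\Rightarrow\varphi(\bar n)$ for every $n$ and also $\Rightarrow\exists x\neg\varphi(x)$. *)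

(* Defs.v *)
From Stdlib Require Import List Arith.
Import ListNotations.

Inductive term : Type :=
| tvar (n : nat)
| tzero
| tsucc (t : term)
| tplus (s t : term)
| ttimes (s t : term).

(* Tait-style L-formulas (L = L_N + T + P) *)
Inductive form : Type :=
| fEq (s t : term) | fNeq (s t : term)
| fT (t : term)    | fNT (t : term)
| fP (t : term)    | fNP (t : term)
| fAnd (A B : form) | fOr (A B : form)
| fAll (A : form)   | fEx (A : form).   (* binders: variable 0 of the body *)

Fixpoint neg (A : form) : form :=
  match A with
  | fEq s t => fNeq s t | fNeq s t => fEq s t
  | fT t => fNT t | fNT t => fT t
  | fP t => fNP t | fNP t => fP t
  | fAnd A B => fOr (neg A) (neg B)
  | fOr A B => fAnd (neg A) (neg B)
  | fAll A => fEx (neg A)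
  | fEx A => fAll (neg A)
  end.

Fixpoint tsubst (s : nat -> term) (t : term) : term :=
  match t with
  | tvar n => s n
  | tzero => tzero
  | tsucc t => tsucc (tsubst s t)
  | tplus a b => tplus (tsubst s a) (tsubst s b)
  | ttimes a b => ttimes (tsubst s a) (tsubst s b)
  end.

Definition tshift (t : term) : term := tsubst (fun i => tvar (S i)) t.

Definition up (s : nat -> term) : nat -> term :=
  fun n => match n with 0 => tvar 0 | S k => tshift (s k) end.

Fixpoint fsubst (s : nat -> term) (A : form) : form :=
  match A with
  | fEq a b => fEq (tsubst s a) (tsubst s b)
  | fNeq a b => fNeq (tsubst s a) (tsubst s b)
  | fT t => fT (tsubst s t) | fNT t => fNT (tsubst s t)
  | fP t => fP (tsubst s t) | fNP t => fNP (tsubst s t)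
  | fAnd A B => fAnd (fsubst s A) (fsubst s B)
  | fOr A B => fOr (fsubst s A) (fsubst s B)
  | fAll A => fAll (fsubst (up s) A)
  | fEx A => fEx (fsubst (up s) A)
  end.

Definition fshift (A : form) : form := fsubst (fun i => tvar (S i)) A.

(* A(t): instantiate the bound variable (variable 0) of a body by t *)
Definition inst (A : form) (t : term) : form :=
  fsubst (fun n => match n with 0 => t | S k => tvar k end) A.

(* A(Su) from A(u), u = variable 0 *)
Definition succ0 : nat -> term :=
  fun n => match n with 0 => tsucc (tvar 0) | S k => tvar (S k) end.

Definition num (n : nat) : term := Nat.iter n tsucc tzero.

Fixpoint tfree_lt (k : nat) (t : term) : Prop :=
  match t with
  | tvar n => n < k
  | tzero => True
  | tsucc t => tfree_lt k t
  | tplus a b | ttimes a b => tfree_lt k a /\ tfree_lt k b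
  end.

Fixpoint ffree_lt (k : nat) (A : form) : Prop :=
  match A with
  | fEq a b | fNeq a b => tfree_lt k a /\ tfree_lt k b
  | fT t | fNT t | fP t | fNP t => tfree_lt k t
  | fAnd A B | fOr A B => ffree_lt k A /\ ffree_lt k B
  | fAll A | fEx A => ffree_lt (S k) A
  end.

Definition sentence (A : form) : Prop := ffree_lt 0 A.
Definition closed_term (t : term) : Prop := tfree_lt 0 t.

Fixpoint arith (A : form) : Prop :=
  match A with
  | fEq _ _ | fNeq _ _ => True
  | fT _ | fNT _ | fP _ | fNP _ => False
  | fAnd A B | fOr A B => arith A /\ arith B
  | fAll A | fEx A => arith A
  end.

Definition cpair (a b : nat) : nat := (a + b) * (a + b + 1) / 2 + b.

Fixpoint tcode (t : term) : nat :=
  match t with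
  | tvar n => cpair 0 n
  | tzero => cpair 1 0
  | tsucc t => cpair 2 (tcode t)
  | tplus a b => cpair 3 (cpair (tcode a) (tcode b))
  | ttimes a b => cpair 4 (cpair (tcode a) (tcode b))
  end.

Fixpoint code (A : form) : nat :=
  match A with
  | fEq a b => cpair 0 (cpair (tcode a) (tcode b))
  | fNeq a b => cpair 1 (cpair (tcode a) (tcode b))
  | fT t => cpair 2 (tcode t)
  | fNT t => cpair 3 (tcode t)
  | fP t => cpair 4 (tcode t)
  | fNP t => cpair 5 (tcode t)
  | fAnd A B => cpair 6 (cpair (code A) (code B))
  | fOr A B => cpair 7 (cpair (code A) (code B))
  | fAll A => cpair 8 (code A)
  | fEx A => cpair 9 (code A)
  end.

Definition quote (A : form) : term := num (code A).

Record model : Type := Model {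
  Tpos : nat -> Prop; Tneg : nat -> Prop;
  Ppos : nat -> Prop; Pneg : nat -> Prop }.

Fixpoint teval (r : nat -> nat) (t : term) : nat :=
  match t with
  | tvar n => r n
  | tzero => 0
  | tsucc t => S (teval r t)
  | tplus a b => teval r a + teval r b
  | ttimes a b => teval r a * teval r b
  end.

Definition val (t : term) : nat := teval (fun _ => 0) t.

Definition scons (n : nat) (r : nat -> nat) : nat -> nat :=
  fun i => match i with 0 => n | S k => r k end.

Fixpoint sat (M : model) (r : nat -> nat) (A : form) : Prop :=
  match A with
  | fEq a b => teval r a = teval r b
  | fNeq a b => teval r a <> teval r b
  | fT t => Tpos M (teval r t)
  | fNT t => Tneg M (teval r t)
  | fP t => Ppos M (teval r t)
  | fNP t => Pneg M (teval r t)
  | fAnd A B => sat M r A /\ sat M r B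
  | fOr A B => sat M r A \/ sat M r B
  | fAll A => forall n, sat M (scons n r) A
  | fEx A => exists n, sat M (scons n r) A
  end.

Definition ssat (M : model) (A : form) : Prop := sat M (fun _ => 0) A.

Definition holds (M : model) (G D : list form) : Prop :=
  forall r, (forall A, In A G -> sat M r A) -> exists B, In B D /\ sat M r B.

Definition emptyM : model := Model (fun _ => False) (fun _ => False)
                                   (fun _ => False) (fun _ => False).
Definition asat (r : nat -> nat) (A : form) : Prop := sat emptyM r A.

Inductive deriv (Ax : list form -> list form -> Prop) :
  list form -> list form -> Prop :=
| d_ax G D s : Ax G D -> deriv Ax (map (fsubst s) G) (map (fsubst s) D)
| d_id A : deriv Ax [A] [A]
| d_cut G D A : deriv Ax G (A :: D) -> deriv Ax (A :: G) D -> deriv Ax G D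
| d_weak G D G' D' : deriv Ax G D -> incl G G' -> incl D D' -> deriv Ax G' D'
| d_negL G D A : deriv Ax G (A :: D) -> deriv Ax (neg A :: G) D
| d_andL G D A B : deriv Ax (A :: B :: G) D -> deriv Ax (fAnd A B :: G) D
| d_andR G D A B : deriv Ax G (A :: D) -> deriv Ax G (B :: D) ->
    deriv Ax G (fAnd A B :: D)
| d_orL G D A B : deriv Ax (A :: G) D -> deriv Ax (B :: G) D ->
    deriv Ax (fOr A B :: G) D
| d_orR G D A B : deriv Ax G (A :: B :: D) -> deriv Ax G (fOr A B :: D)
| d_allL G D A t : deriv Ax (inst A t :: G) D -> deriv Ax (fAll A :: G) D
| d_allR G D A : deriv Ax (map fshift G) (A :: map fshift D) ->
    deriv Ax G (fAll A :: D)
| d_exL G D A : deriv Ax (A :: map fshift G) (map fshift D) ->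
    deriv Ax (fEx A :: G) D
| d_exR G D A t : deriv Ax G (inst A t :: D) -> deriv Ax G (fEx A :: D)
| d_refl G D t : deriv Ax G (fEq t t :: D)
| d_repl G D A s t : deriv Ax G (inst A t :: D) ->
    deriv Ax G (fNeq s t :: inst A s :: D)
| d_ind G D A t :
    deriv Ax (A :: map fshift G) (fsubst succ0 A :: map fshift D) ->
    deriv Ax (inst A tzero :: G) (inst A t :: D).

(* initial sequents of Peano arithmetic (schematic via d_ax) *)
Inductive PAax : list form -> list form -> Prop :=
| pa_lem : PAax [] [fEq (tvar 0) (tvar 1); fNeq (tvar 0) (tvar 1)]
| pa_s0 : PAax [] [fNeq (tsucc (tvar 0)) tzero]
| pa_sinj : PAax [fEq (tsucc (tvar 0)) (tsucc (tvar 1))] [fEq (tvar 0) (tvar 1)]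
| pa_plus0 : PAax [] [fEq (tplus (tvar 0) tzero) (tvar 0)]
| pa_plusS : PAax [] [fEq (tplus (tvar 0) (tsucc (tvar 1)))
                          (tsucc (tplus (tvar 0) (tvar 1)))]
| pa_times0 : PAax [] [fEq (ttimes (tvar 0) tzero) tzero]
| pa_timesS : PAax [] [fEq (ttimes (tvar 0) (tsucc (tvar 1)))
                           (tplus (ttimes (tvar 0) (tvar 1)) (tvar 0))].

Definition PAderiv : list form -> list form -> Prop := deriv PAax.

Definition PA_equiv (A B : form) : Prop :=
  PAderiv [A] [B] /\ PAderiv [B] [A] /\
  PAderiv [neg A] [neg B] /\ PAderiv [neg B] [neg A].

Definition base_paradoxical (A : form) : Prop :=
  sentence A /\ PA_equiv A (fNT (quote A)).

Definition BPcodes (n : nat) : Prop :=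
  exists A, base_paradoxical A /\ code A = n.

Definition defines1 (F : form) (Rl : nat -> Prop) : Prop :=
  arith F /\ forall r, asat r F <-> Rl (r 0).
Definition defines2 (F : form) (Rl : nat -> nat -> Prop) : Prop :=
  arith F /\ forall r, asat r F <-> Rl (r 0) (r 1).
Definition defines3 (F : form) (Rl : nat -> nat -> nat -> Prop) : Prop :=
  arith F /\ forall r, asat r F <-> Rl (r 0) (r 1) (r 2).

Definition SentR (x : nat) : Prop := exists A, sentence A /\ code A = x.
Definition ClTR (x : nat) : Prop := exists t, closed_term t /\ tcode t = x.
Definition ValR (x y : nat) : Prop :=
  exists t, closed_term t /\ tcode t = x /\ val t = y.
Definition EqcR (x y z : nat) : Prop :=
  exists s t, closed_term s /\ closed_term t /\ tcode s = x /\ tcode t = y /\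
              code (fEq s t) = z.
Definition NeqcR (x y z : nat) : Prop :=
  exists s t, closed_term s /\ closed_term t /\ tcode s = x /\ tcode t = y /\
              code (fNeq s t) = z.
Definition NegR (x y : nat) : Prop := exists A, code A = x /\ code (neg A) = y.
Definition TcR (x y : nat) : Prop := y = code (fT (num x)).
Definition PcR (x y : nat) : Prop := y = code (fP (num x)).
Definition AndcR (x y z : nat) : Prop :=
  exists A B, code A = x /\ code B = y /\ code (fAnd A B) = z.
Definition OrcR (x y z : nat) : Prop :=
  exists A B, code A = x /\ code B = y /\ code (fOr A B) = z.
Definition Fml1R (x : nat) : Prop := exists A, ffree_lt 1 A /\ code A = x.
Definition AllcR (x y : nat) : Prop := exists A, code A = x /\ code (fAll A) = y.
Definition ExcR (x y : nat) : Prop := exists A, code A = x /\ code (fEx A) = y.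
Definition SubR (x n y : nat) : Prop :=
  exists A, code A = x /\ code (inst A (num n)) = y.

Record SynRep : Type := {
  rSent : form; rClT : form; rVal : form; rEqc : form; rNeqc : form;
  rNeg : form; rTc : form; rPc : form; rAndc : form; rOrc : form;
  rFml1 : form; rAllc : form; rExc : form; rSub : form }.

Definition rep_correct (R : SynRep) : Prop :=
  defines1 (rSent R) SentR /\ defines1 (rClT R) ClTR /\
  defines2 (rVal R) ValR /\ defines3 (rEqc R) EqcR /\
  defines3 (rNeqc R) NeqcR /\ defines2 (rNeg R) NegR /\
  defines2 (rTc R) TcR /\ defines2 (rPc R) PcR /\
  defines3 (rAndc R) AndcR /\ defines3 (rOrc R) OrcR /\
  defines1 (rFml1 R) Fml1R /\ defines2 (rAllc R) AllcR /\
  defines2 (rExc R) ExcR /\ defines3 (rSub R) SubR.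

Definition fapp (F : form) (ts : list term) : form :=
  fsubst (fun i => nth i ts tzero) F.

(* lit(f(args)) := exists z (G(args,z) /\ lit(z)) *)
Definition via (G : form) (args : list term) (lit : term -> form) : form :=
  fEx (fAnd (fapp G (map tshift args ++ [tvar 0])) (lit (tvar 0))).

Definition Pi (R : SynRep) (B : form) : form :=
  fOr (fapp B [tvar 0])
      (fEx (fAnd (fapp (rNeg R) [tvar 1; tvar 0]) (fapp B [tvar 0]))).
Definition PiAt (R : SynRep) (B : form) (t : term) : form := fapp (Pi R B) [t].

Section TPaxioms.
Variable R : SynRep.
Variable B : form.
Let v (i : nat) : term := tvar i.
Let Sent t := fapp (rSent R) [t].
Let ClT t := fapp (rClT R) [t].
Let Val a b := fapp (rVal R) [a; b].
Let Eqc a b c := fapp (rEqc R) [a; b; c].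
Let Neqc a b c := fapp (rNeqc R) [a; b; c].
Let Neg a b := fapp (rNeg R) [a; b].
Let Tc a b := fapp (rTc R) [a; b].
Let Pc a b := fapp (rPc R) [a; b].
Let Andc a b c := fapp (rAndc R) [a; b; c].
Let Orc a b c := fapp (rOrc R) [a; b; c].
Let Fml1 a := fapp (rFml1 R) [a].
Let Allc a b := fapp (rAllc R) [a; b].
Let Exc a b := fapp (rExc R) [a; b].
Let PiF t := PiAt R B t.
(* inside one binder (v0 = bound y, v1 = formula code f):  Lit(f(y)) *)
Let SubLit (lit : term -> form) := via (rSub R) [v 1; v 0] lit.

Inductive TPax : list form -> list form -> Prop :=
| T1a : TPax [ClT (v 0); ClT (v 1); Val (v 0) (v 2); Val (v 1) (v 3);
              Eqc (v 0) (v 1) (v 4); fEq (v 2) (v 3)] [fT (v 4)]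
| T1a' : TPax [ClT (v 0); ClT (v 1); Val (v 0) (v 2); Val (v 1) (v 3);
               Eqc (v 0) (v 1) (v 4); fT (v 4)] [fEq (v 2) (v 3)]
| T1b : TPax [ClT (v 0); ClT (v 1); Val (v 0) (v 2); Val (v 1) (v 3);
              Neqc (v 0) (v 1) (v 4); fNeq (v 2) (v 3)] [fT (v 4)]
| T1b' : TPax [ClT (v 0); ClT (v 1); Val (v 0) (v 2); Val (v 1) (v 3);
               Neqc (v 0) (v 1) (v 4); fT (v 4)] [fNeq (v 2) (v 3)]
| T2a : TPax [Sent (v 0); Pc (v 0) (v 1); fP (v 0)] [fT (v 1)]
| T2a' : TPax [Sent (v 0); Pc (v 0) (v 1); fT (v 1)] [fP (v 0)]
| T2b : TPax [Sent (v 0); Pc (v 0) (v 1); Neg (v 1) (v 2); fNP (v 0)] [fT (v 2)]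
| T2b' : TPax [Sent (v 0); Pc (v 0) (v 1); Neg (v 1) (v 2); fT (v 2)] [fNP (v 0)]
| T3a : TPax [Sent (v 0); Tc (v 0) (v 1); fT (v 0)] [fT (v 1)]
| T3a' : TPax [Sent (v 0); Tc (v 0) (v 1); fT (v 1)] [fT (v 0)]
| T3b : TPax [Sent (v 0); Neg (v 0) (v 1); fT (v 1)] [fNT (v 0)]
| T3b' : TPax [Sent (v 0); Neg (v 0) (v 1); fNT (v 0)] [fT (v 1)]
| T4a : TPax [Sent (v 0); Sent (v 1); Andc (v 0) (v 1) (v 2);
              fAnd (fT (v 0)) (fT (v 1))] [fT (v 2)]
| T4a' : TPax [Sent (v 0); Sent (v 1); Andc (v 0) (v 1) (v 2); fT (v 2)]
              [fAnd (fT (v 0)) (fT (v 1))]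
| T4b : TPax [Sent (v 0); Sent (v 1); Orc (v 0) (v 1) (v 2);
              fOr (fT (v 0)) (fT (v 1))] [fT (v 2)]
| T4b' : TPax [Sent (v 0); Sent (v 1); Orc (v 0) (v 1) (v 2); fT (v 2)]
              [fOr (fT (v 0)) (fT (v 1))]
| T5a : TPax [Fml1 (v 0); Allc (v 0) (v 1); fAll (SubLit fT)] [fT (v 1)]
| T5a' : TPax [Fml1 (v 0); Allc (v 0) (v 1); fT (v 1)] [fAll (SubLit fT)]
| T5b : TPax [Fml1 (v 0); Exc (v 0) (v 1); fEx (SubLit fT)] [fT (v 1)]
| T5b' : TPax [Fml1 (v 0); Exc (v 0) (v 1); fT (v 1)] [fEx (SubLit fT)]
| P1 : TPax [Sent (v 0); PiF (v 0)] [fP (v 0)]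
| P2T : TPax [Sent (v 0); Tc (v 0) (v 1); Neg (v 1) (v 2); fP (v 2)] [fP (v 1)]
| P2T' : TPax [Sent (v 0); Tc (v 0) (v 1); Neg (v 1) (v 2); fP (v 1)] [fP (v 2)]
| P2P : TPax [Sent (v 0); Pc (v 0) (v 1); Neg (v 1) (v 2); fP (v 2)] [fP (v 1)]
| P2P' : TPax [Sent (v 0); Pc (v 0) (v 1); Neg (v 1) (v 2); fP (v 1)] [fP (v 2)]
| P3 : TPax [Sent (v 0); Tc (v 0) (v 1); fP (v 1)] [fOr (fP (v 0)) (PiF (v 1))]
| P3' : TPax [Sent (v 0); Tc (v 0) (v 1); fOr (fP (v 0)) (PiF (v 1))] [fP (v 1)]
| P4 : TPax [Sent (v 0); Sent (v 1); Andc (v 0) (v 1) (v 2); fP (v 2)]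
    [fOr (fOr (fOr (fAnd (fP (v 0)) (fP (v 1))) (fAnd (fT (v 0)) (fP (v 1))))
              (fAnd (fT (v 1)) (fP (v 0)))) (PiF (v 2))]
| P4' : TPax [Sent (v 0); Sent (v 1); Andc (v 0) (v 1) (v 2);
    fOr (fOr (fOr (fAnd (fP (v 0)) (fP (v 1))) (fAnd (fT (v 0)) (fP (v 1))))
              (fAnd (fT (v 1)) (fP (v 0)))) (PiF (v 2))] [fP (v 2)]
| P5 : TPax [Sent (v 0); Sent (v 1); Orc (v 0) (v 1) (v 2); fP (v 2)]
    [fOr (fOr (fOr (fAnd (fP (v 0)) (fP (v 1))) (fAnd (fNT (v 0)) (fP (v 1))))
              (fAnd (fNT (v 1)) (fP (v 0)))) (PiF (v 2))]
| P5' : TPax [Sent (v 0); Sent (v 1); Orc (v 0) (v 1) (v 2);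
    fOr (fOr (fOr (fAnd (fP (v 0)) (fP (v 1))) (fAnd (fNT (v 0)) (fP (v 1))))
              (fAnd (fNT (v 1)) (fP (v 0)))) (PiF (v 2))] [fP (v 2)]
| P6 : TPax [Fml1 (v 0); Allc (v 0) (v 1); fP (v 1)]
    [fOr (fAnd (fEx (SubLit fP)) (fAll (fOr (SubLit fP) (SubLit fT))))
         (PiF (v 1))]
| P6' : TPax [Fml1 (v 0); Allc (v 0) (v 1);
    fOr (fAnd (fEx (SubLit fP)) (fAll (fOr (SubLit fP) (SubLit fT))))
        (PiF (v 1))] [fP (v 1)]
| P7 : TPax [Fml1 (v 0); Exc (v 0) (v 1); fP (v 1)]
    [fOr (fAnd (fEx (SubLit fP)) (fAll (fOr (SubLit fP) (SubLit fNT))))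
         (PiF (v 1))]
| P7' : TPax [Fml1 (v 0); Exc (v 0) (v 1);
    fOr (fAnd (fEx (SubLit fP)) (fAll (fOr (SubLit fP) (SubLit fNT))))
        (PiF (v 1))] [fP (v 1)]
| I1 : TPax [Sent (v 0); Neg (v 0) (v 1); Orc (v 0) (v 1) (v 2); fT (v 2)]
            [fNP (v 0)].
End TPaxioms.

Definition TPderiv (R : SynRep) (B : form) : list form -> list form -> Prop :=
  deriv (fun G D => PAax G D \/ TPax R B G D).

(* The jump Gamma_TP (SK-satisfaction of the formula scriptP written out) *)
Definition sent_codes (P : form -> Prop) (n : nat) : Prop :=
  exists A, sentence A /\ code A = n /\ P A.

Definition Pcond (R : SynRep) (B : form) (M : model) (A : form) : Prop :=
  let Pp X := Ppos M (code X) in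
  let Tp X := Tpos M (code X) in
  let Tn X := Tneg M (code X) in
  asat (fun _ => 0) (PiAt R B (quote A))
  \/ (exists t, closed_term t /\ A = fT t /\ Ppos M (val t))
  \/ (exists t, closed_term t /\ A = fNT t /\ Ppos M (val t))
  \/ (exists C D, A = fAnd C D /\
                 ((Pp C /\ Pp D) \/ (Tp C /\ Pp D) \/ (Tp D /\ Pp C)))
  \/ (exists C D, A = fOr C D /\
                 ((Pp C /\ Pp D) \/ (Tn C /\ Pp D) \/ (Tn D /\ Pp C)))
  \/ (exists C, A = fAll C /\
                 (exists y, Pp (inst C (num y))) /\
                 (forall y, Pp (inst C (num y)) \/ Tp (inst C (num y))))
  \/ (exists C, A = fEx C /\
                 (exists y, Pp (inst C (num y))) /\
                 (forall y, Pp (inst C (num y)) \/ Tn (inst C (num y)))).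

Definition jump (R : SynRep) (B : form) (M : model) : model :=
  Model (sent_codes (fun A => ssat M A))
        (sent_codes (fun A => ssat M (neg A)))
        (sent_codes (Pcond R B M))
        (sent_codes (fun A => ssat M (fOr A (neg A)))).

Definition mle (M N : model) : Prop :=
  (forall n, Tpos M n -> Tpos N n) /\ (forall n, Tneg M n -> Tneg N n) /\
  (forall n, Ppos M n -> Ppos N n) /\ (forall n, Pneg M n -> Pneg N n).
Definition meq (M N : model) : Prop := mle M N /\ mle N M.

Definition least_fixed_point (R : SynRep) (B : form) (M : model) : Prop :=
  meq (jump R B M) M /\ (forall N, meq (jump R B N) N -> mle M N).

Definition omega_consistent (D : list form -> list form -> Prop) : Prop :=
  ~ exists A, ffree_lt 1 A /\ (forall n, D [] [inst A (num n)]) /\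
              D [] [fEx (neg A)].

(* Main.v *)
Require Import Defs.
From Stdlib Require Import List Arith Lia Classical Setoid.
Import ListNotations.

Definition tri (n : nat) := n * (n + 1) / 2.

Lemma tri_S n : tri (S n) = tri n + S n.
Proof.
  unfold tri.
  replace (S n * (S n + 1)) with (n * (n + 1) + S n * 2) by lia.
  rewrite Nat.div_add by lia. reflexivity.
Qed.

Lemma tri_mono n m : n <= m -> tri n <= tri m.
Proof.
  induction 1; auto. rewrite tri_S. lia.
Qed.

Lemma cpair_tri a b : cpair a b = tri (a + b) + b.
Proof. reflexivity. Qed.

Lemma cpair_inj a b c d : cpair a b = cpair c d -> a = c /\ b = d.
Proof.
  rewrite !cpair_tri. intros H.
  destruct (lt_eq_lt_dec (a + b) (c + d)) as [[Hl|He]|Hl].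
  - pose proof (tri_mono (S (a+b)) (c+d) Hl). rewrite tri_S in H0. lia.
  - rewrite He in H. lia.
  - pose proof (tri_mono (S (c+d)) (a+b) Hl). rewrite tri_S in H0. lia.
Qed.

Ltac cinj H := let H1 := fresh in let H2 := fresh in
  apply cpair_inj in H; destruct H as [H1 H2]; try discriminate H1.

Lemma tcode_inj s t : tcode s = tcode t -> s = t.
Proof.
  revert t; induction s; destruct t; simpl; intros H; cinj H; try discriminate;
  try (f_equal; auto; fail).
  all: try (match goal with H : cpair _ _ = cpair _ _ |- _ => cinj H end; f_equal; auto).
Qed.

Lemma code_inj A B : code A = code B -> A = B.
Proof.
  revert B; induction A; destruct B; simpl; intros H; cinj H; try discriminate;
  try (f_equal; auto using tcode_inj; fail).
  all: match goal with H : cpair _ _ = cpair _ _ |- _ => cinj H end; f_equal; auto using tcode_inj.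
Qed.

Lemma neg_neg A : neg (neg A) = A.
Proof. induction A; simpl; congruence. Qed.

Lemma ffree_neg k A : ffree_lt k (neg A) <-> ffree_lt k A.
Proof. revert k; induction A; simpl; intros; try tauto; firstorder. Qed.

Lemma teval_num r n : teval r (num n) = n.
Proof. induction n; simpl; auto. Qed.

Lemma tfree_num k n : tfree_lt k (num n).
Proof. induction n; simpl; auto. Qed.

Lemma tfree_mono k m t : k <= m -> tfree_lt k t -> tfree_lt m t.
Proof. induction t; simpl; intuition lia. Qed.

Lemma tfree_subst k m s t : tfree_lt k t -> (forall i, i < k -> tfree_lt m (s i)) ->
  tfree_lt m (tsubst s t).
Proof. induction t; simpl; intuition. Qed.

Lemma tfree_shift m t : tfree_lt m t -> tfree_lt (S m) (tshift t).
Proof. intros H; unfold tshift; apply (tfree_subst m); auto. intros; simpl; lia. Qed.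

Lemma ffree_subst k m sg A : ffree_lt k A -> (forall i, i < k -> tfree_lt m (sg i)) ->
  ffree_lt m (fsubst sg A).
Proof.
  revert k m sg; induction A; simpl; intros k m sg H Hs;
    try (destruct H; split; eauto using tfree_subst; fail); eauto using tfree_subst.
  - apply (IHA (S k)); auto. intros [|i] Hi; simpl; [lia|]. apply tfree_shift, Hs; lia.
  - apply (IHA (S k)); auto. intros [|i] Hi; simpl; [lia|]. apply tfree_shift, Hs; lia.
Qed.

Lemma sentence_inst A t : ffree_lt 1 A -> closed_term t -> sentence (inst A t).
Proof.
  intros H Ht. unfold sentence, inst. apply (ffree_subst 1); auto.
  intros [|i] Hi; simpl; auto; lia.
Qed.

Fixpoint fsize (A : form) : nat :=
  match A with
  | fAnd A B | fOr A B => S (fsize A + fsize B)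
  | fAll A | fEx A => S (fsize A)
  | _ => 0
  end.

Lemma fsize_subst s A : fsize (fsubst s A) = fsize A.
Proof. revert s; induction A; simpl; intros; auto. Qed.

Lemma teval_ext r r' t : (forall i, r i = r' i) -> teval r t = teval r' t.
Proof. intros H; induction t; simpl; auto. Qed.

Lemma scons_ext n r r' : (forall i, r i = r' i) -> forall i, scons n r i = scons n r' i.
Proof. intros H [|i]; simpl; auto. Qed.

Lemma sat_ext M A : forall r r', (forall i, r i = r' i) -> (sat M r A <-> sat M r' A).
Proof.
  induction A; simpl; intros r r' H;
    repeat rewrite (teval_ext r r') by auto; try tauto.
  - rewrite (IHA1 r r' H), (IHA2 r r' H); tauto.
  - rewrite (IHA1 r r' H), (IHA2 r r' H); tauto.
  - split; intros Hn n; specialize (Hn n); eapply (IHA (scons n r) (scons n r')) in Hn || eapply (IHA (scons n r) (scons n r')); eauto; apply scons_ext; auto.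
  - split; intros [n Hn]; exists n; [eapply (IHA (scons n r) (scons n r')) | eapply (IHA (scons n r) (scons n r'))]; eauto; apply scons_ext; auto.
Qed.

Lemma teval_subst r sg t : teval r (tsubst sg t) = teval (fun i => teval r (sg i)) t.
Proof. induction t; simpl; auto. Qed.

Lemma sat_subst M A : forall r sg, sat M r (fsubst sg A) <-> sat M (fun i => teval r (sg i)) A.
Proof.
  induction A; simpl; intros r sg; repeat rewrite teval_subst; try tauto.
  - rewrite IHA1, IHA2; tauto.
  - rewrite IHA1, IHA2; tauto.
  - assert (E : forall n, sat M (scons n r) (fsubst (up sg) A) <->
                     sat M (scons n (fun i => teval r (sg i))) A).
    { intros n. rewrite IHA. apply sat_ext. intros [|i]; simpl; auto.
      unfold tshift. rewrite teval_subst. apply teval_ext. intros; reflexivity. }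
    split; intros H n; apply E; auto.
  - assert (E : forall n, sat M (scons n r) (fsubst (up sg) A) <->
                     sat M (scons n (fun i => teval r (sg i))) A).
    { intros n. rewrite IHA. apply sat_ext. intros [|i]; simpl; auto.
      unfold tshift. rewrite teval_subst. apply teval_ext. intros; reflexivity. }
    split; intros [n H]; exists n; apply E; auto.
Qed.

Lemma sat_inst M r A t : sat M r (inst A t) <-> sat M (scons (teval r t) r) A.
Proof.
  unfold inst. rewrite sat_subst. apply sat_ext. intros [|i]; reflexivity.
Qed.

Lemma sat_fshift M r n A : sat M (scons n r) (fshift A) <-> sat M r A.
Proof. unfold fshift. rewrite sat_subst. apply sat_ext. intros; reflexivity. Qed.

Lemma sat_succ0 M r n A : sat M (scons n r) (fsubst succ0 A) <-> sat M (scons (S n) r) A.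
Proof. rewrite sat_subst. apply sat_ext. intros [|i]; reflexivity. Qed.

Lemma sat_mono M N (H : mle M N) A : forall r, sat M r A -> sat N r A.
Proof.
  destruct H as (H1 & H2 & H3 & H4).
  induction A; simpl; intros r Hs; auto; firstorder.
Qed.

Lemma sat_arith M N A : arith A -> forall r, sat M r A <-> sat N r A.
Proof.
  induction A; simpl; intros HA r; try tauto.
  - rewrite IHA1, IHA2 by tauto; tauto.
  - rewrite IHA1, IHA2 by tauto; tauto.
  - split; intros H n; apply (IHA HA); auto.
  - split; intros [n H]; exists n; apply (IHA HA); auto.
Qed.

Definition consistent (M : model) : Prop :=
  (forall n, Tpos M n -> Tneg M n -> False) /\ (forall n, Ppos M n -> Pneg M n -> False).

Lemma sat_consistent M (HC : consistent M) A : forall r, sat M r A -> sat M r (neg A) -> False.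
Proof.
  destruct HC as [H1 H2].
  induction A; simpl; intros r Ha Hb; eauto; try firstorder.
Qed.

Lemma in_map_sat M r (f : form -> form) (G : list form) : (forall A, In A (map f G) -> sat M r A) ->
  forall A, In A G -> sat M r (f A).
Proof. intros H A HA. apply H, in_map; auto. Qed.

Theorem soundness (Ax : list form -> list form -> Prop) M
  (HAx : forall G D, Ax G D -> holds M G D) (HC : consistent M) :
  forall G D, deriv Ax G D -> holds M G D.
Proof.
  induction 1; intros r HG.
  -
    destruct (HAx _ _ H (fun i => teval r (s i))) as [B [HB1 HB2]].
    + intros A HA. apply sat_subst. apply HG, in_map; auto.
    + exists (fsubst s B); split; [apply in_map; auto|]. apply sat_subst; auto.
  - exists A; split; [left; auto|]. apply HG; left; auto.
  - destruct (IHderiv1 r HG) as [B [[<-|HB1] HB2]].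
    + apply IHderiv2. intros C [<-|HC']; auto.
    + exists B; auto.
  - destruct (IHderiv r) as [B [HB1 HB2]]; eauto.
  - destruct (IHderiv r) as [B [[<-|HB1] HB2]].
    + intros; apply HG; right; auto.
    + exfalso. eapply sat_consistent; eauto. apply HG; left; auto.
    + exists B; auto.
  - apply IHderiv. intros C HC'. destruct (HG (fAnd A B) (or_introl eq_refl)) as [Ha Hb].
    destruct HC' as [<-|[<-|HC']]; auto. apply HG; right; auto.
  - destruct (IHderiv1 r HG) as [C [[<-|HC1] HC2]]; [|exists C; split; [right|]; auto].
    destruct (IHderiv2 r HG) as [C' [[<-|HC1'] HC2']]; [|exists C'; split; [right|]; auto].
    exists (fAnd A B); split; [left|split]; auto.
  - destruct (HG (fOr A B) (or_introl eq_refl)) as [Ha|Hb].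
    + apply IHderiv1. intros C [<-|HC']; auto. apply HG; right; auto.
    + apply IHderiv2. intros C [<-|HC']; auto. apply HG; right; auto.
  - destruct (IHderiv r HG) as [C [[<-|[<-|HC1]] HC2]].
    + exists (fOr A B); split; [left|left]; auto.
    + exists (fOr A B); split; [left|right]; auto.
    + exists C; split; [right|]; auto.
  - apply IHderiv. intros C [<-|HC'].
    + apply sat_inst. apply (HG (fAll A) (or_introl eq_refl)).
    + apply HG; right; auto.
  - destruct (classic (exists B, In B D /\ sat M r B)) as [Hd|Hd].
    + destruct Hd as [B [HB1 HB2]]; exists B; split; [right|]; auto.
    + exists (fAll A); split; [left; auto|]. simpl. intros n.
      destruct (IHderiv (scons n r)) as [C [[<-|HC1] HC2]]; auto.
      * intros C HC'. apply in_map_iff in HC'. destruct HC' as [C' [<- HC']].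
        apply sat_fshift; auto.
      * apply in_map_iff in HC1. destruct HC1 as [C' [<- HC']].
        apply sat_fshift in HC2. exfalso; apply Hd; eauto.
  - destruct (HG (fEx A) (or_introl eq_refl)) as [n Hn].
    destruct (IHderiv (scons n r)) as [C [HC1 HC2]].
    + intros C [<-|HC']; auto. apply in_map_iff in HC'. destruct HC' as [C' [<- HC']].
      apply sat_fshift; apply HG; right; auto.
    + apply in_map_iff in HC1. destruct HC1 as [C' [<- HC']].
      apply sat_fshift in HC2. eauto.
  - destruct (IHderiv r HG) as [C [[<-|HC1] HC2]].
    + exists (fEx A); split; [left; auto|]. exists (teval r t). apply sat_inst; auto.
    + exists C; split; [right|]; auto.
  - exists (fEq t t); split; [left|]; simpl; auto.
  - destruct (Nat.eq_dec (teval r s) (teval r t)) as [E|E].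
    + destruct (IHderiv r HG) as [C [[<-|HC1] HC2]].
      * exists (inst A s); split; [right; left; auto|]. apply sat_inst. rewrite E.
        apply sat_inst; auto.
      * exists C; split; [right; right|]; auto.
    + exists (fNeq s t); split; [left|]; simpl; auto.
  - destruct (classic (exists B, In B D /\ sat M r B)) as [Hd|Hd].
    + destruct Hd as [B [HB1 HB2]]; exists B; split; [right|]; auto.
    + exists (inst A t); split; [left; auto|]. apply sat_inst.
      generalize (teval r t). intros m. induction m.
      * assert (H0 := HG _ (or_introl eq_refl)). apply sat_inst in H0. simpl in H0. auto.
      * destruct (IHderiv (scons m r)) as [C [[<-|HC1] HC2]].
        -- intros C [<-|HC']; auto. apply in_map_iff in HC'. destruct HC' as [C' [<- HC']].
           apply sat_fshift; apply HG; right; auto.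
        -- apply sat_succ0; auto.
        -- apply in_map_iff in HC1. destruct HC1 as [C' [<- HC']].
           apply sat_fshift in HC2. exfalso; apply Hd; eauto.
Qed.

Lemma PAax_holds M G D : PAax G D -> holds M G D.
Proof.
  intros H r HG. destruct H; simpl in *.
  - destruct (Nat.eq_dec (r 0) (r 1)); [exists (fEq (tvar 0) (tvar 1))|exists (fNeq (tvar 0) (tvar 1))];
      simpl; auto.
  - eexists; split; [left; reflexivity|]; simpl; auto.
  - eexists; split; [left; reflexivity|]; simpl.
    assert (H := HG _ (or_introl eq_refl)); simpl in H; lia.
  - eexists; split; [left; reflexivity|]; simpl; lia.
  - eexists; split; [left; reflexivity|]; simpl; lia.
  - eexists; split; [left; reflexivity|]; simpl; lia.
  - eexists; split; [left; reflexivity|]; simpl; lia.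
Qed.

Lemma PA_sound M (HC : consistent M) G D : PAderiv G D -> holds M G D.
Proof. apply soundness; auto. apply PAax_holds. Qed.

Lemma mle_refl M : mle M M.
Proof. repeat split; auto. Qed.

Lemma mle_trans M N K : mle M N -> mle N K -> mle M K.
Proof. intros (a&b&c&d) (e&f&g&h); repeat split; auto. Qed.

Lemma Pcond_mono R B X Y (H : mle X Y) A : Pcond R B X A -> Pcond R B Y A.
Proof.
  destruct H as (H1 & H2 & H3 & H4). unfold Pcond.
  intros [H|[H|[H|[H|[H|[H|H]]]]]].
  - left; auto.
  - right; left. destruct H as (t & ? & ? & ?); eauto.
  - right; right; left. destruct H as (t & ? & ? & ?); eauto.
  - do 3 right; left. destruct H as (C & D & ? & ?); exists C, D; intuition.
  - do 4 right; left. destruct H as (C & D & ? & ?); exists C, D; intuition.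
  - do 5 right; left. destruct H as (C & ? & [y ?] & ?); exists C; split; auto; split; eauto.
    intros z; destruct (H5 z); auto.
  - do 6 right. destruct H as (C & ? & [y ?] & ?); exists C; split; auto; split; eauto.
    intros z; destruct (H5 z); auto.
Qed.

Lemma jump_mono R B X Y : mle X Y -> mle (jump R B X) (jump R B Y).
Proof.
  intros H. unfold jump, sent_codes; repeat split; simpl; intros n (A & ? & ? & ?);
    exists A; repeat split; auto; try (eapply sat_mono; eauto).
  eapply Pcond_mono; eauto.
Qed.

Definition supM (S : model -> Prop) : model :=
  Model (fun n => exists X, S X /\ Tpos X n) (fun n => exists X, S X /\ Tneg X n)
        (fun n => exists X, S X /\ Ppos X n) (fun n => exists X, S X /\ Pneg X n).

Lemma mle_sup (S : model -> Prop) X : S X -> mle X (supM S).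
Proof. intros H; repeat split; simpl; eauto. Qed.

Lemma sup_le (S : model -> Prop) Y : (forall X, S X -> mle X Y) -> mle (supM S) Y.
Proof.
  intros H; repeat split; simpl; intros n (X & HX & Hn); destruct (H X HX) as (a&b&c&d); auto.
Qed.

Inductive Tw (R : SynRep) (B : form) : model -> Prop :=
| tw_bot : Tw R B emptyM
| tw_jump X : Tw R B X -> Tw R B (jump R B X)
| tw_sup (S : model -> Prop) : (forall X, S X -> Tw R B X) -> Tw R B (supM S).

Lemma empty_le X : mle emptyM X.
Proof. repeat split; simpl; tauto. Qed.

Lemma Tw_infl R B X : Tw R B X -> mle X (jump R B X).
Proof.
  induction 1.
  - apply empty_le.
  - apply jump_mono; auto.
  - apply sup_le. intros X HX. eapply mle_trans; [apply H0; auto|].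
    apply jump_mono, mle_sup; auto.
Qed.

Definition extreme R B c := forall x, Tw R B x -> mle x c -> ~ mle c x -> mle (jump R B x) c.

Lemma lemA R B c : Tw R B c -> extreme R B c ->
  forall x, Tw R B x -> mle x c \/ mle (jump R B c) x.
Proof.
  intros Hc Hext x Hx. induction Hx.
  - left; apply empty_le.
  - destruct IHHx as [H|H].
    + destruct (classic (mle c X)) as [H'|H'].
      * right; apply jump_mono; auto.
      * left; apply Hext; auto.
    + right. eapply mle_trans; eauto. apply Tw_infl; auto.
  - destruct (classic (exists X, S X /\ mle (jump R B c) X)) as [[X [HX H']]|H'].
    + right. eapply mle_trans; eauto. apply mle_sup; auto.
    + left. apply sup_le. intros X HX. destruct (H0 X HX) as [?|?]; auto.
      exfalso; eauto.
Qed.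

Lemma lemB R B c : Tw R B c -> extreme R B c.
Proof.
  induction 1; intros x Hx Hle Hnle.
  - exfalso; apply Hnle, empty_le.
  - destruct (lemA R B X H IHTw x Hx) as [H1|H1]; [|contradiction].
    destruct (classic (mle X x)) as [H2|H2].
    + apply jump_mono; auto.
    + eapply mle_trans; [apply IHTw; auto|]. apply Tw_infl; auto.
  - assert (Hex : exists c, S c /\ ~ mle (jump R B c) x).
    { apply NNPP; intros Hn. apply Hnle. apply sup_le. intros X HX.
      apply mle_trans with (jump R B X); [apply Tw_infl; auto|].
      apply NNPP; intros Hn'; apply Hn; eauto. }
    destruct Hex as [c [Hc Hc']].
    destruct (lemA R B c (H c Hc) (H0 c Hc) x Hx) as [H1|H1]; [|contradiction].
    destruct (classic (mle c x)) as [H2|H2].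
    + assert (Hex : exists c', S c' /\ ~ mle c' c).
      { apply NNPP; intros Hn. apply Hnle. apply mle_trans with c; auto.
        apply sup_le. intros X HX. apply NNPP; intros Hn'; apply Hn; eauto. }
      destruct Hex as [c' [Hc1 Hc2]].
      destruct (lemA R B c (H c Hc) (H0 c Hc) c' (H c' Hc1)) as [H3|H3]; [contradiction|].
      apply mle_trans with (jump R B c); [apply jump_mono; auto|].
      eapply mle_trans; eauto. apply mle_sup; auto.
    + eapply mle_trans; [apply (H0 c Hc); auto|]. apply mle_sup; auto.
Qed.

Lemma Tw_chain R B x y : Tw R B x -> Tw R B y -> mle x y \/ mle y x.
Proof.
  intros Hx Hy. destruct (lemA R B y Hy (lemB R B y Hy) x Hx) as [H|H]; auto.
  right. eapply mle_trans; eauto. apply Tw_infl; auto.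
Qed.

Lemma sat_def1 F Rl M r a : defines1 F Rl -> (sat M r (fapp F [a]) <-> Rl (teval r a)).
Proof.
  intros [HA HF]. unfold fapp. rewrite sat_subst. rewrite (sat_arith M emptyM) by auto.
  apply HF.
Qed.
Lemma sat_def2 F Rl M r a b : defines2 F Rl -> (sat M r (fapp F [a; b]) <-> Rl (teval r a) (teval r b)).
Proof.
  intros [HA HF]. unfold fapp. rewrite sat_subst. rewrite (sat_arith M emptyM) by auto.
  apply HF.
Qed.
Lemma sat_def3 F Rl M r a b c : defines3 F Rl ->
  (sat M r (fapp F [a; b; c]) <-> Rl (teval r a) (teval r b) (teval r c)).
Proof.
  intros [HA HF]. unfold fapp. rewrite sat_subst. rewrite (sat_arith M emptyM) by auto.
  apply HF.
Qed.

Definition PiS (n : nat) : Prop := BPcodes n \/ exists z, NegR n z /\ BPcodes z.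

Lemma sat_PiAt R B (HR : rep_correct R) (HB : defines1 B BPcodes) M r t :
  sat M r (PiAt R B t) <-> PiS (teval r t).
Proof.
  unfold PiAt, fapp at 1. rewrite sat_subst. unfold Pi. simpl sat.
  rewrite (sat_def1 _ _ _ _ _ HB). unfold PiS. simpl.
  assert (HN : defines2 (rNeg R) NegR) by apply HR.
  split; (intros [H|[z H]]; [left; auto|right; exists z]);
   rewrite (sat_def2 _ _ _ _ _ _ HN) in *; rewrite (sat_def1 _ _ _ _ _ HB) in *; simpl in *; auto.
Qed.

Definition BP := base_paradoxical.

Lemma PiS_code A : PiS (code A) <-> BP A \/ BP (neg A).
Proof.
  unfold PiS, BPcodes, NegR. split.
  - intros [(A' & H1 & H2)|(z & (A'' & H3 & H4) & (A3 & H5 & H6))].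
    + apply code_inj in H2; subst; left; auto.
    + apply code_inj in H3; subst. apply code_inj in H6; subst. right; auto.
  - intros [H|H]; [left; eauto|right]. exists (code (neg A)); split; eauto.
Qed.

Lemma PiS_neg A : PiS (code (neg A)) <-> PiS (code A).
Proof. rewrite !PiS_code, neg_neg. tauto. Qed.

Lemma holds1 M A C r : holds M [A] [C] -> sat M r A -> sat M r C.
Proof.
  intros H HA. destruct (H r) as [D [[<-|[]] HD]]; auto.
  intros E [<-|[]]; auto.
Qed.

Lemma quote_val r A : teval r (quote A) = code A.
Proof. apply teval_num. Qed.

Lemma jumpT R B X A : Tpos (jump R B X) (code A) -> ssat X A.
Proof. intros (A' & _ & H1 & H2). apply code_inj in H1; subst; auto. Qed.
Lemma jumpF R B X A : Tneg (jump R B X) (code A) -> ssat X (neg A).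
Proof. intros (A' & _ & H1 & H2). apply code_inj in H1; subst; auto. Qed.
Lemma jumpP R B X A : Ppos (jump R B X) (code A) -> Pcond R B X A.
Proof. intros (A' & _ & H1 & H2). apply code_inj in H1; subst; auto. Qed.
Lemma jumpN R B X A : Pneg (jump R B X) (code A) -> ssat X (fOr A (neg A)).
Proof. intros (A' & _ & H1 & H2). apply code_inj in H1; subst; auto. Qed.

Lemma BP_undet R B X (HC : consistent X) (Hi : mle X (jump R B X)) A :
  BP A -> ~ ssat X A /\ ~ ssat X (neg A).
Proof.
  intros [Hs (H1 & H2 & H3 & H4)]. destruct Hi as (T1 & T2 & _ & _).
  assert (S1 := PA_sound X HC _ _ H1). assert (S3 := PA_sound X HC _ _ H3).
  split; intros H.
  - apply (holds1 _ _ _ _ S1) in H as H'. simpl in H'. rewrite quote_val in H'.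
    apply T2, jumpF in H'. apply (sat_consistent X HC A (fun _ => 0)); auto.
  - apply (holds1 _ _ _ _ S3) in H as H'. simpl in H'. rewrite quote_val in H'.
    apply T1, jumpT in H'. apply (sat_consistent X HC A (fun _ => 0)); auto.
Qed.

Lemma neg_subst sg A : neg (fsubst sg A) = fsubst sg (neg A).
Proof. revert sg; induction A; simpl; intros; f_equal; auto. Qed.

Definition Inv (X : model) : Prop :=
  consistent X /\ (forall n, Ppos X n -> Tpos X n -> False) /\
  (forall n, Ppos X n -> Tneg X n -> False).

Lemma ssat_inst_num X A y : ssat X (inst A (num y)) <-> sat X (scons y (fun _ => 0)) A.
Proof. unfold ssat. rewrite sat_inst, teval_num. reflexivity. Qed.

Lemma L R B (HR : rep_correct R) (HB : defines1 B BPcodes) X (HI : Inv X)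
  (Hi : mle X (jump R B X)) :
  forall n A, fsize A < n -> Pcond R B X A -> ~ ssat X A /\ ~ ssat X (neg A).
Proof.
  destruct HI as [HC [HPT HPF]].
  assert (Hi' := Hi). destruct Hi' as (I1 & I2 & I3 & I4).
  induction n; intros A Hs HP; [lia|].
  assert (PP : forall C, fsize C < n -> Ppos X (code C) -> ~ ssat X C /\ ~ ssat X (neg C)).
  { intros C HCs HC'. apply IHn; auto. apply jumpP, I3; auto. }
  assert (TP : forall C, Tpos X (code C) -> ssat X C).
  { intros C H. apply jumpT with R B; auto. }
  assert (FP : forall C, Tneg X (code C) -> ssat X (neg C)).
  { intros C H. apply jumpF with R B; auto. }
  assert (CO : forall C, ssat X C -> ssat X (neg C) -> False).
  { intros C; apply sat_consistent; auto. }
  unfold Pcond in HP. destruct HP as [H|[H|[H|[H|[H|[H|H]]]]]].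
  - unfold asat in H. rewrite sat_PiAt, quote_val, PiS_code in H by auto.
    destruct H as [H|H].
    + eapply BP_undet; eauto.
    + apply (BP_undet R B X HC Hi) in H. rewrite neg_neg in H. tauto.
  - destruct H as (t & _ & -> & H). unfold ssat; simpl. split; intros H'; eauto.
  - destruct H as (t & _ & -> & H). unfold ssat; simpl. split; intros H'; eauto.
  - destruct H as (C & D & -> & H). simpl in Hs. unfold ssat; simpl.
    fold (ssat X C) (ssat X D) (ssat X (neg C)) (ssat X (neg D)).
    assert (SC : fsize C < n) by lia. assert (SD : fsize D < n) by lia.
    destruct H as [[H1 H2]|[[H1 H2]|[H1 H2]]].
    + apply PP in H1; apply PP in H2; auto; tauto.
    + apply TP in H1; apply PP in H2; auto. split; [tauto|]. intros [Hx|Hx]; first [exact (CO _ H1 Hx) | exact (CO _ Hx H1) | tauto].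
    + apply TP in H1; apply PP in H2; auto. split; [tauto|]. intros [Hx|Hx]; first [exact (CO _ H1 Hx) | exact (CO _ Hx H1) | tauto].
  - destruct H as (C & D & -> & H). simpl in Hs. unfold ssat; simpl.
    fold (ssat X C) (ssat X D) (ssat X (neg C)) (ssat X (neg D)).
    assert (SC : fsize C < n) by lia. assert (SD : fsize D < n) by lia.
    destruct H as [[H1 H2]|[[H1 H2]|[H1 H2]]].
    + apply PP in H1; apply PP in H2; auto; tauto.
    + apply FP in H1; apply PP in H2; auto. split; [|tauto]. intros [Hx|Hx]; first [exact (CO _ H1 Hx) | exact (CO _ Hx H1) | tauto].
    + apply FP in H1; apply PP in H2; auto. split; [|tauto]. intros [Hx|Hx]; first [exact (CO _ H1 Hx) | exact (CO _ Hx H1) | tauto].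
  - destruct H as (C & -> & [y Hy] & Hall). simpl in Hs.
    assert (Hsz : forall y, fsize (inst C (num y)) < n).
    { intros; unfold inst; rewrite fsize_subst; lia. }
    split.
    + intros H. apply PP in Hy; auto. apply (proj1 Hy). apply ssat_inst_num. apply H.
    + intros [m Hm]. fold (sat X (scons m (fun _ => 0)) (neg C)) in Hm.
      assert (Hm' : ssat X (neg (inst C (num m)))).
      { unfold inst. rewrite neg_subst. fold (inst (neg C) (num m)). apply ssat_inst_num; auto. }
      destruct (Hall m) as [Hp|Ht].
      * apply PP in Hp; auto. tauto.
      * apply TP in Ht. eauto.
  - destruct H as (C & -> & [y Hy] & Hall). simpl in Hs.
    assert (Hsz : forall y, fsize (inst C (num y)) < n).
    { intros; unfold inst; rewrite fsize_subst; lia. }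
    split.
    + intros [m Hm].
      assert (Hm' : ssat X (inst C (num m))) by (apply ssat_inst_num; auto).
      destruct (Hall m) as [Hp|Ht].
      * apply PP in Hp; auto. tauto.
      * apply FP in Ht. eauto.
    + intros H. apply PP in Hy; auto. apply (proj2 Hy).
      unfold inst. rewrite neg_subst. fold (inst (neg C) (num y)). apply ssat_inst_num. apply H.
Qed.

Lemma Inv_jump R B (HR : rep_correct R) (HB : defines1 B BPcodes) X (HI : Inv X)
  (Hi : mle X (jump R B X)) : Inv (jump R B X).
Proof.
  assert (LL : forall A, Pcond R B X A -> ~ ssat X A /\ ~ ssat X (neg A)).
  { intros A; apply (L R B HR HB X HI Hi (S (fsize A))); lia. }
  destruct HI as [[HC1 HC2] _].
  split; [split|split].
  - intros n (A & _ & <- & H1) H2. apply jumpF in H2. exact (sat_consistent X (conj HC1 HC2) A _ H1 H2).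
  - intros n (A & _ & <- & H1) H2. apply jumpN in H2. apply LL in H1. destruct H2; tauto.
  - intros n (A & _ & <- & H1) H2. apply jumpT in H2. apply LL in H1. tauto.
  - intros n (A & _ & <- & H1) H2. apply jumpF in H2. apply LL in H1. tauto.
Qed.

Lemma Tw_Inv R B (HR : rep_correct R) (HB : defines1 B BPcodes) X : Tw R B X -> Inv X.
Proof.
  induction 1.
  - repeat split; simpl; tauto.
  - apply Inv_jump; auto. apply Tw_infl; auto.
  - assert (Hmax : forall X1 X2, S X1 -> S X2 -> exists X3, S X3 /\ mle X1 X3 /\ mle X2 X3).
    { intros X1 X2 H1 H2. destruct (Tw_chain R B X1 X2 (H X1 H1) (H X2 H2)) as [E|E].
      - exists X2; repeat split; auto using mle_refl; apply E.
      - exists X1; repeat split; auto using mle_refl; apply E. }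
    split; [split|split]; simpl; intros n (X1 & H1 & A1) (X2 & H2 & A2);
      destruct (Hmax X1 X2 H1 H2) as (X3 & H3 & (a&b&c&d) & (e&f&g&h));
      destruct (H0 X3 H3) as [[C1 C2] [C3 C4]]; eauto.
Qed.

Lemma lfp_consistent R B (HR : rep_correct R) (HB : defines1 B BPcodes) M :
  least_fixed_point R B M -> consistent M.
Proof.
  intros [HF Hl].
  set (U := supM (Tw R B)).
  assert (HU : Tw R B U) by (apply tw_sup; auto).
  assert (HfU : meq (jump R B U) U).
  { split.
    - apply mle_sup. apply tw_jump; auto.
    - apply Tw_infl; auto. }
  destruct (Hl U HfU) as (a & b & c & d).
  destruct (Tw_Inv R B HR HB U HU) as [[C1 C2] _].
  split; intros n H1 H2; eauto.
Qed.

Fixpoint allsat M r (G : list form) : Prop :=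
  match G with [] => True | A :: G => sat M r A /\ allsat M r G end.
Fixpoint exsat M r (D : list form) : Prop :=
  match D with [] => False | A :: D => sat M r A \/ exsat M r D end.

Lemma holds_intro M G D : (forall r, allsat M r G -> exsat M r D) -> holds M G D.
Proof.
  intros H r HG. assert (HA : allsat M r G).
  { clear H. induction G; simpl; auto. split; [apply HG; left; auto|].
    apply IHG; intros; apply HG; right; auto. }
  apply H in HA. clear H HG. induction D; simpl in *; [tauto|].
  destruct HA as [H|H]; [exists a; auto|]. destruct (IHD H) as [B' [? ?]]; eauto.
Qed.

Lemma sat_SubLit R M r lit : defines3 (rSub R) SubR ->
  (sat M r (via (rSub R) [tvar 1; tvar 0] lit) <->
   exists z, SubR (r 1) (r 0) z /\ sat M (scons z r) (lit (tvar 0))).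
Proof.
  intros HS. unfold via. simpl sat. cbn [map app tshift tsubst].
  split; intros [z [H1 H2]]; exists z; split; auto;
    rewrite (sat_def3 _ _ _ _ _ _ _ HS) in *; simpl in *; auto.
Qed.

Lemma SubR_code A n y : SubR (code A) n y <-> y = code (inst A (num n)).
Proof.
  unfold SubR; split.
  - intros (A' & H1 & H2). apply code_inj in H1; subst; auto.
  - intros ->; eauto.
Qed.



Lemma fpT R B M (HF : meq (jump R B M) M) A : Tpos M (code A) <-> sentence A /\ ssat M A.
Proof.
  destruct HF as [(a&b&c&d) (e&f&g&h)]. split.
  - intros H. apply e in H. destruct H as (A' & H1 & H2 & H3). apply code_inj in H2; subst; auto.
  - intros [H1 H2]. apply a. exists A; auto.
Qed.
Lemma fpF R B M (HF : meq (jump R B M) M) A : Tneg M (code A) <-> sentence A /\ ssat M (neg A).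
Proof.
  destruct HF as [(a&b&c&d) (e&f&g&h)]. split.
  - intros H. apply f in H. destruct H as (A' & H1 & H2 & H3). apply code_inj in H2; subst; auto.
  - intros [H1 H2]. apply b. exists A; auto.
Qed.
Lemma fpP R B M (HF : meq (jump R B M) M) A : Ppos M (code A) <-> sentence A /\ Pcond R B M A.
Proof.
  destruct HF as [(a&b&c&d) (e&f&g&h)]. split.
  - intros H. apply g in H. destruct H as (A' & H1 & H2 & H3). apply code_inj in H2; subst; auto.
  - intros [H1 H2]. apply c. exists A; auto.
Qed.
Lemma fpN R B M (HF : meq (jump R B M) M) A : Pneg M (code A) <-> sentence A /\ ssat M (fOr A (neg A)).
Proof.
  destruct HF as [(a&b&c&d) (e&f&g&h)]. split.
  - intros H. apply h in H. destruct H as (A' & H1 & H2 & H3). apply code_inj in H2; subst; auto.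
  - intros [H1 H2]. apply d. exists A; auto.
Qed.

Lemma Pcase1 R B (HR : rep_correct R) (HB : defines1 B BPcodes) A : asat (fun _ => 0) (PiAt R B (quote A)) <-> PiS (code A).
Proof. unfold asat. rewrite sat_PiAt, quote_val by auto. reflexivity. Qed.

Ltac dPcond H Pc1 := unfold Pcond in H;
  destruct H as [H|[(?t & ?Ht & ?He & H)|[(?t & ?Ht & ?He & H)|[(?C & ?D & ?He & H)|[(?C & ?D & ?He & H)|[(?C & ?He & H)|(?C & ?He & H)]]]]]];
  [rewrite Pc1 in H|..]; try discriminate; try (match goal with He : _ = _ |- _ => injection He; clear He; intros; subst end).

Lemma sent_num_lit n : ffree_lt 0 (fT (num n)) /\ ffree_lt 0 (fNT (num n)) /\ ffree_lt 0 (fP (num n)) /\ ffree_lt 0 (fNP (num n)).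
Proof. simpl; repeat split; apply tfree_num. Qed.

Lemma TPax_holds R B (HR : rep_correct R) (HB : defines1 B BPcodes) M
  (HF : meq (jump R B M) M) G D : TPax R B G D -> holds M G D.
Proof.
  pose proof (fpT R B M HF) as FT. pose proof (fpF R B M HF) as FF.
  pose proof (fpP R B M HF) as FP. pose proof (fpN R B M HF) as FN.
  pose proof (Pcase1 R B HR HB) as PC1.
  pose proof HR as HR'. destruct HR' as (HSent & HClT & HVal & HEqc & HNeqc & HNeg & HTc & HPc & HAndc & HOrc &
                  HFml1 & HAllc & HExc & HSub).
  pose proof (fun M r a => sat_def1 _ _ M r a HSent) as ESent.
  pose proof (fun M r a => sat_def1 _ _ M r a HClT) as EClT.
  pose proof (fun M r a => sat_def1 _ _ M r a HFml1) as EFml1.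
  pose proof (fun M r a b => sat_def2 _ _ M r a b HVal) as EVal.
  pose proof (fun M r a b => sat_def2 _ _ M r a b HNeg) as ENeg.
  pose proof (fun M r a b => sat_def2 _ _ M r a b HTc) as ETc.
  pose proof (fun M r a b => sat_def2 _ _ M r a b HPc) as EPc.
  pose proof (fun M r a b => sat_def2 _ _ M r a b HAllc) as EAllc.
  pose proof (fun M r a b => sat_def2 _ _ M r a b HExc) as EExc.
  pose proof (fun M r a b c => sat_def3 _ _ M r a b c HEqc) as EEqc.
  pose proof (fun M r a b c => sat_def3 _ _ M r a b c HNeqc) as ENeqc.
  pose proof (fun M r a b c => sat_def3 _ _ M r a b c HAndc) as EAndc.
  pose proof (fun M r a b c => sat_def3 _ _ M r a b c HOrc) as EOrc.
  pose proof (fun M r lit => sat_SubLit R M r lit HSub) as ESub.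
  pose proof (fun M r t => sat_PiAt R B HR HB M r t) as EPi.
  intros H; destruct H; apply holds_intro; intros r HG; cbn [allsat exsat sat] in HG |- *;
  try repeat setoid_rewrite ESent in HG;
  try repeat setoid_rewrite EClT in HG;
  try repeat setoid_rewrite EFml1 in HG;
  try repeat setoid_rewrite EVal in HG;
  try repeat setoid_rewrite ENeg in HG;
  try repeat setoid_rewrite ETc in HG;
  try repeat setoid_rewrite EPc in HG;
  try repeat setoid_rewrite EAllc in HG;
  try repeat setoid_rewrite EExc in HG;
  try repeat setoid_rewrite EEqc in HG;
  try repeat setoid_rewrite ENeqc in HG;
  try repeat setoid_rewrite EAndc in HG;
  try repeat setoid_rewrite EOrc in HG;
  try repeat setoid_rewrite ESub in HG;
  try repeat setoid_rewrite EPi in HG;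
  try repeat setoid_rewrite ESub; try repeat setoid_rewrite EPi;
  cbn [teval scons sat] in *.
  all: clear ESent EClT EFml1 EVal ENeg ETc EPc EAllc EExc EEqc ENeqc EAndc EOrc ESub EPi
     HSent HClT HVal HEqc HNeqc HNeg HTc HPc HAndc HOrc HFml1 HAllc HExc HSub.
  all: unfold SentR, ClTR, ValR, EqcR, NeqcR, NegR, TcR, PcR, AndcR, OrcR, Fml1R, AllcR, ExcR in HG;
    repeat match goal with H : _ /\ _ |- _ => destruct H | H : exists _, _ |- _ => destruct H
      | H : True |- _ => clear H end.
  all: try (remember (r 0) as a0 eqn:E0; clear E0); try (remember (r 1) as a1 eqn:E1; clear E1);
    try (remember (r 2) as a2 eqn:E2; clear E2); try (remember (r 3) as a3 eqn:E3; clear E3);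
    try (remember (r 4) as a4 eqn:E4; clear E4); try clear r; subst;
    repeat match goal with H : code _ = code _ |- _ => apply code_inj in H; try subst
      | H : tcode _ = tcode _ |- _ => apply tcode_inj in H; try subst end.
  all: try (right; fail); try (apply or_introl).

  - apply FT; split; [split; assumption | exact H4].
  - apply FT in H4; destruct H4 as [_ H4]; exact H4.
  - apply FT; split; [split; assumption | exact H4].
  - apply FT in H4; destruct H4 as [_ H4]; exact H4.
  - apply FT; split; [apply sent_num_lit|]. unfold ssat; simpl; rewrite teval_num; auto.
  - apply FT in H1; destruct H1 as [_ H1]; unfold ssat in H1; simpl in H1; rewrite teval_num in H1; auto.
  - apply FT; split; [apply sent_num_lit|]. unfold ssat; simpl; rewrite teval_num; auto.
  - apply FT in H2; destruct H2 as [_ H2]; unfold ssat in H2; simpl in H2; rewrite teval_num in H2; auto.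
  - apply FT; split; [apply sent_num_lit|]. unfold ssat; simpl; rewrite teval_num; auto.
  - apply FT in H1; destruct H1 as [_ H1]; unfold ssat in H1; simpl in H1; rewrite teval_num in H1; auto.
  - apply FT in H1; apply FF; tauto.
  - apply FF in H1; apply FT; split; [apply ffree_neg|]; tauto.
  - apply FT in H2; apply FT in H4; apply FT; unfold ssat, sentence in *; simpl in *; tauto.
  - apply FT in H2; rewrite !FT; unfold ssat, sentence in *; simpl in *; tauto.
  - apply FT; rewrite !FT in H2; unfold ssat, sentence in *; simpl in *; tauto.
  - apply FT in H2; rewrite !FT; unfold ssat, sentence in *; simpl in *; tauto.
  - apply FT; split; [exact H|]. unfold ssat; simpl; intros n. destruct (H1 n) as [z [Hz Hz']].
    apply SubR_code in Hz; subst. apply FT in Hz'. destruct Hz' as [_ Hz']. apply ssat_inst_num in Hz'. exact Hz'.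
  - intros n; exists (code (inst x0 (num n))); split; [apply SubR_code; auto|].
    apply FT; split; [apply sentence_inst; auto; apply tfree_num|]. apply ssat_inst_num.
    apply FT in H1. destruct H1 as [_ H1]. apply H1.
  - apply SubR_code in H1; subst; apply FT in H3; apply FT; split; auto.
    exists x; apply ssat_inst_num; tauto.
  - apply FT in H1. destruct H1 as [_ [n Hn]]. exists n, (code (inst x0 (num n))).
    split; [apply SubR_code; auto|]. apply FT; split; [apply sentence_inst; auto; apply tfree_num|].
    apply ssat_inst_num; auto.
  - apply FP; split; auto. unfold Pcond; left. apply PC1; auto.
  - apply FP in H2. destruct H2 as [_ H2]. apply FP; split; [apply sent_num_lit|]. simpl in H2. dPcond H2 PC1.
    + left. apply PC1. rewrite <- PiS_neg. simpl. auto.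
    + right; left. eauto.
  - apply FP in H2. destruct H2 as [_ H2]. apply FP; split; [apply sent_num_lit|]. simpl. dPcond H2 PC1.
    + left. apply PC1. rewrite <- PiS_neg in H2. simpl in H2. auto.
    + right; right; left. eauto.
  - apply FP in H2. destruct H2 as [_ H2]. apply FP; split; [apply sent_num_lit|]. simpl in H2. dPcond H2 PC1.
    left. apply PC1. rewrite <- PiS_neg. simpl. auto.
  - apply FP in H2. destruct H2 as [_ H2]. apply FP; split; [apply sent_num_lit|]. simpl. dPcond H2 PC1.
    left. apply PC1. rewrite <- PiS_neg in H2. simpl in H2. auto.
  - apply FP in H1. destruct H1 as [_ H1]. dPcond H1 PC1.
    + right; auto.
    + left. unfold val in H1. rewrite teval_num in H1. auto.
  - apply FP; split; [apply sent_num_lit|]. destruct H1 as [H1|H1].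
    + right; left. exists (num (code x)); split; [apply tfree_num|]; split; auto.
      unfold val; rewrite teval_num; auto.
    + left; apply PC1; auto.
  - apply FP in H2. destruct H2 as [_ H2]. dPcond H2 PC1; [right; auto| left; tauto].
  - apply FP; split; [split; auto|]. destruct H2 as [H2|H2].
    + do 3 right; left. exists x2, x1; split; auto; tauto.
    + left; apply PC1; auto.
  - apply FP in H2. destruct H2 as [_ H2]. dPcond H2 PC1; [right; auto| left; tauto].
  - apply FP; split; [split; auto|]. destruct H2 as [H2|H2].
    + do 4 right; left. exists x2, x1; split; auto; tauto.
    + left; apply PC1; auto.
  - apply FP in H1. destruct H1 as [_ H1]. dPcond H1 PC1; [right; auto|]. left.
    destruct H1 as [[y Hy] Hall]. split.
    + exists y, (code (inst C (num y))); split; [apply SubR_code; auto|auto].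
    + intros n. destruct (Hall n) as [Hn|Hn]; [left|right]; exists (code (inst C (num n)));
        split; auto; apply SubR_code; auto.
  - apply FP; split; [exact H|]. destruct H1 as [[[y [z [Hz Hz']]] Hall]|H1].
    + do 5 right; left. exists x0; split; auto. apply SubR_code in Hz; subst. split; eauto.
      intros n. destruct (Hall n) as [[z2 [Hz2 Hz3]]|[z2 [Hz2 Hz3]]]; apply SubR_code in Hz2; subst; auto.
    + left; apply PC1; auto.
  - apply FP in H1. destruct H1 as [_ H1]. dPcond H1 PC1; [right; auto|]. left.
    destruct H1 as [[y Hy] Hall]. split.
    + exists y, (code (inst C (num y))); split; [apply SubR_code; auto|auto].
    + intros n. destruct (Hall n) as [Hn|Hn]; [left|right]; exists (code (inst C (num n)));
        split; auto; apply SubR_code; auto.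
  - apply FP; split; [exact H|]. destruct H1 as [[[y [z [Hz Hz']]] Hall]|H1].
    + do 6 right. exists x0; split; auto. apply SubR_code in Hz; subst. split; eauto.
      intros n. destruct (Hall n) as [[z2 [Hz2 Hz3]]|[z2 [Hz2 Hz3]]]; apply SubR_code in Hz2; subst; auto.
    + left; apply PC1; auto.
  - apply FT in H2. apply FN. destruct H2 as [_ H2]. split; auto.
Qed.


Theorem mainTheorem1 (R : SynRep) (B : form)
  (HR : rep_correct R) (HB : defines1 B BPcodes)
  (M : model) (HM : least_fixed_point R B M) :
  (forall G D, TPderiv R B G D -> holds M G D) /\
  omega_consistent (TPderiv R B).
Proof.
  assert (HC : consistent M) by (apply (lfp_consistent R B HR HB M HM)).
  assert (HF : meq (jump R B M) M) by apply HM.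
  assert (SND : forall G D, TPderiv R B G D -> holds M G D).
  { intros G D. apply soundness; auto.
    intros G' D' [H|H]; [apply PAax_holds; auto | apply (TPax_holds R B HR HB M HF); auto]. }
  split; auto.
  intros (A & _ & Hall & Hex).
  destruct (SND _ _ Hex (fun _ => 0)) as [C [[<-|[]] HCs]]; [intros ? []|].
  destruct HCs as [n Hn].
  destruct (SND _ _ (Hall n) (fun _ => 0)) as [C [[<-|[]] HCs]]; [intros ? []|].
  apply sat_inst in HCs. rewrite teval_num in HCs.
  exact (sat_consistent M HC A _ HCs Hn).
Qed.
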